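(* Let $C=(C_{i,j})$ be an $m\times n$ evolutionary stable (ES) configuration. Then there are no indices $i,j$ (with all positions below lying in the grid) such that either (Type III) $C_{i-1,j-1}=C_{i,j}=C_{i+1,j+1}=0$ and $C_{i+2,l}=1$ for all $l$ with $j+1\le l\le n$; or (Type IV) $C_{i-1,j-1}=C_{i,j}=C_{i+1,j+1}=0$ and, for all $l$ with $j+1\le l\le n$, $C_{i+1,l}=0$ if $l-(j+1)\equiv 0 \pmod 3$ and $C_{i+1,l}=1$ otherwise. The same holds for the mirror images of these two constellations under the reflection $j\mapsto n+1-j$ of columns (with the row patterns then extending to the left border).
   Context: An $m\times n$ configuration is a $0$-$1$ matrix $C=(C_{i,j})$, $1\le i\le m$, $1\le j\le n$; $C_{i,j}=1$ means lot $(i,j)$ is occupied by a house. Row $1$ is the northernmost, row $m$ the southernmost; column $1$ westernmost, column $n$ easternmost. A house at $(i,j)$ is blocked from sunlight if the three lots $(i,j-1)$, $(i,j+1)$, $(i+1,j)$ all lie inside the grid and are all occupied (lots outside the grid never obstruct sunlight). $C$ is permissible if no house is blocked, and maximal if it is permissible and setting any single empty lot to $1$ yields a non-permissible configuration. A maximal configuration is resistant to predators if, for every empty lot, putting a house on it results in that new house being blocked; it is resistant to altruists if, for every empty lot, putting a house on it results in some other (already existing) house being blocked. An ES configuration is a maximal configuration resistant to both predators and altruists. *)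

(* Defs.v *)
From mathcomp Require Import all_boot.
Set Implicit Arguments. Unset Strict Implicit. Unset Printing Implicit Defensive.

(* Configurations: C : nat -> nat -> bool, indices 1-based; only the values
   at lots (i,j) with 1 <= i <= m, 1 <= j <= n are meaningful.
   C i j = true means lot (i,j) is occupied. *)
Definition config := nat -> nat -> bool.

Definition inside (m n i j : nat) : bool := (1 <= i <= m) && (1 <= j <= n).

Definition blocked (m n : nat) (C : config) (i j : nat) : bool :=
  [&& C i j,
      inside m n i j.-1 && C i j.-1,
      inside m n i j.+1 && C i j.+1 &
      inside m n i.+1 j && C i.+1 j].

Definition permissible (m n : nat) (C : config) : Prop :=
  forall i j, inside m n i j -> ~~ blocked m n C i j.

Definition add_house (C : config) (i j : nat) : config :=
  fun a b => if (a == i) && (b == j) then true else C a b.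

Definition maximal (m n : nat) (C : config) : Prop :=
  permissible m n C /\
  forall i j, inside m n i j -> C i j = false ->
    ~ permissible m n (add_house C i j).

Definition resistant_predators (m n : nat) (C : config) : Prop :=
  forall i j, inside m n i j -> C i j = false ->
    blocked m n (add_house C i j) i j.

Definition resistant_altruists (m n : nat) (C : config) : Prop :=
  forall i j, inside m n i j -> C i j = false ->
    exists i' j', inside m n i' j' /\ (i', j') <> (i, j) /\ C i' j' /\
                   blocked m n (add_house C i j) i' j'.

Definition ES (m n : nat) (C : config) : Prop :=
  maximal m n C /\ resistant_predators m n C /\ resistant_altruists m n C.

Definition typeIII (m n : nat) (C : config) (i j : nat) : Prop :=
  (2 <= i) && (i + 2 <= m) /\ (2 <= j) && (j + 1 <= n) /\
      C i.-1 j.-1 = false /\ C i j = false /\ C i.+1 j.+1 = false /\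
      forall l, j + 1 <= l <= n -> C (i + 2) l = true.

Definition typeIV (m n : nat) (C : config) (i j : nat) : Prop :=
  (2 <= i) && (i + 1 <= m) /\ (2 <= j) && (j + 1 <= n) /\
      C i.-1 j.-1 = false /\ C i j = false /\ C i.+1 j.+1 = false /\
      forall l, j + 1 <= l <= n -> C i.+1 l = ((l - (j + 1)) %% 3 != 0).

Definition mirror (n : nat) (C : config) : config := fun i j => C i (n.+1 - j).

(* Main.v *)
Require Import Defs.
From mathcomp Require Import all_boot.
From mathcomp Require Import zify.
Set Implicit Arguments. Unset Strict Implicit. Unset Printing Implicit Defensive.


Lemma cfgE (D : config) r c r' c' b : D r c = b -> r = r' -> c = c' -> D r' c' = b.
Proof. by move=> h <- <-. Qed.

Section Core.
Variables (m n : nat) (C : config).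

Hypothesis G1 : forall i c, 1 <= i <= m -> 1 <= c <= n -> C i c = false ->
  [/\ 2 <= c, c < n, i < m & [/\ C i c.-1 = true, C i c.+1 = true & C i.+1 c = true]].
Hypothesis G2 : forall i c, 1 <= i -> i < m -> 2 <= c -> c < n ->
  C i c = true -> C i c.-1 = true -> C i c.+1 = true -> C i.+1 c = false.
Hypothesis G3 : forall i c, 1 <= i <= m -> 1 <= c <= n -> C i c = false ->
  [\/ 3 <= c /\ C i.+1 c.-1 = true,
      c.+2 <= n /\ C i.+1 c.+1 = true |
      2 <= i /\ [/\ C i.-1 c.-1 = true, C i.-1 c = true & C i.-1 c.+1 = true]].

Ltac clC := repeat match goal with H : C _ _ = _ |- _ => clear H end.
Ltac lia' := clC; lia.

Lemma CEb r c r' c' b : C r c = b -> r = r' -> c = c' -> C r' c' = b.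
Proof. by move=> h <- <-. Qed.

Lemma colnP i : 1 <= i <= m -> 1 <= n -> C i n = true.
Proof.
move=> hi hn; case E: (C i n) => //.
have [_ h _ _] := G1 (c:=n) hi ltac:(lia') E; lia'.
Qed.

Lemma aboveP i c : 1 <= i -> i < m -> 1 <= c <= n -> C i.+1 c = false -> C i c = true.
Proof.
move=> h1 h2 h3 h4; case E: (C i c) => //.
have [_ _ _ [_ _ h]] := G1 (i:=i) ltac:(lia') h3 E; by rewrite h in h4.
Qed.

Lemma houseF i c : 1 <= i -> i < m -> 2 <= c -> c < n ->
  C i c.-1 = true -> C i c.+1 = true -> C i.+1 c = true -> C i c = false.
Proof.
move=> h1 h2 h3 h4 h5 h6 h7; case E: (C i c) => //.
by rewrite (G2 h1 h2 h3 h4 E h5 h6) in h7.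
Qed.

Lemma Vlem q a : 1 <= q -> q.+1 <= m -> 1 <= a -> a.+2 <= n ->
  C q.+1 a = false -> C q.+1 a.+2 = false ->
  exists r, [/\ q = r.+1, 1 <= r, C q a.+1 = false,
     [/\ C r a = true, C r a.+1 = true & C r a.+2 = true]
   & [/\ C r a.-1 = false, C q a.-1 = true, C r a.+3 = false & C q a.+3 = true]].
Proof.
move=> h1 h2 h3 h4 z1 z2.
have [a2 an qm [_ r1 _]] := G1 (i:=q.+1) (c:=a) ltac:(lia') ltac:(lia') z1.
have [_ a2n _ _] := G1 (i:=q.+1) (c:=a.+2) ltac:(lia') ltac:(lia') z2.
have ca : C q a = true by apply: aboveP => //; lia'.
have ca2 : C q a.+2 = true by apply: aboveP => //; lia'.
have ca1 : C q a.+1 = false by apply: houseF => //; lia'.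
have [[_ hl]|[_ hr]|[q2 [u1 u2 u3]]] := G3 (i:=q) (c:=a.+1) ltac:(lia') ltac:(lia') ca1.
- by rewrite /= z1 in hl.
- by rewrite z2 in hr.
destruct q as [|r]; first lia'.
rewrite /= in u1 u2 u3.
have ra : C r a.-1 = false.
  case E: (C r a.-1) => //.
  have : C r.+1 a = false.
    apply: (G2 _ _ _ _ u1 E u2); lia'.
  by rewrite ca.
have [_ _ _ [_ _ qa]] := G1 (i:=r) (c:=a.-1) ltac:(lia') ltac:(lia') ra.
have ra3 : C r a.+3 = false.
  case E: (C r a.+3) => //.
  have : C r.+1 a.+2 = false.
    apply: (G2 _ _ _ _ u3 u2 E); lia'.
  by rewrite ca2.
have [_ _ _ [_ _ qa3]] := G1 (i:=r) (c:=a.+3) ltac:(lia') ltac:(lia') ra3.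
exists r; split => //; lia'.
Qed.

Ltac ceb H := apply: (CEb H); lia'.

Definition phase r x w := forall c, x <= c <= w -> C r c = ((c - x) %% 3 != 0).

Lemma phF r x w c : phase r x w -> x <= c <= w -> (c - x) %% 3 = 0 -> C r c = false.
Proof. by move=> h hc hm; rewrite h // hm. Qed.

Lemma phT r x w c : phase r x w -> x <= c <= w -> (c - x) %% 3 <> 0 -> C r c = true.
Proof. by move=> h hc hm; rewrite h //; apply/eqP. Qed.

Lemma phI r x w x' w' : phase r x w -> x <= x' -> w' <= w -> (x' - x) %% 3 = 0 ->
  phase r x' w'.
Proof.
move=> h h1 h2 h3 c hc; rewrite h; last lia.
have -> : (c - x) %% 3 = (c - x') %% 3 by lia.
by [].
Qed.

Lemma phS r x w : phase r x w -> x <= w.+1 -> C r w.+1 = ((w.+1 - x) %% 3 != 0) ->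
  phase r x w.+1.
Proof.
move=> h _ e c hc; case: (ltngtP c w.+1) => [lt|gt|->] //; last lia.
by apply: h; lia.
Qed.

Lemma ph1 r x : C r x = false -> phase r x x.
Proof.
move=> h c hc; have -> : c = x by lia.
by rewrite subnn mod0n h.
Qed.

Lemma phP r x w : C r x = false -> C r x.+1 = true -> C r x.+2 = true ->
  phase r x.+3 w -> phase r x w.
Proof.
move=> h0 h1 h2 h c hc.
case: (ltnP c x.+3) => hc3.
- case E: (c == x); first by rewrite (eqP E) subnn mod0n h0.
  case E1: (c == x.+1).
    by rewrite (eqP E1) h1; have -> : (x.+1 - x) %% 3 = 1 by lia.
  have -> : c = x.+2 by move/eqP: E; move/eqP: E1; lia.
  by rewrite h2; have -> : (x.+2 - x) %% 3 = 2 by lia.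
- rewrite h; last lia.
  by have -> : (c - x.+3) %% 3 = (c - x) %% 3 by lia.
Qed.

Definition Tcfg q x k :=
  [/\ phase q x (x + 3*k), C q (x + 3*k).+1 = true & C q (x + 3*k).+2 = false].

Lemma scanR q x k : 1 <= q -> q.+1 <= m -> 1 <= x -> x.+1 + 3*k <= n ->
  phase q.+1 x.+1 (x.+1 + 3*k) -> C q x = false ->
  (exists2 k', k' < k & Tcfg q x k') \/ phase q x (x + 3*k).
Proof.
move=> hq hqm hx.
elim: k => [|k IH] hn ph hz.
  by right; rewrite addn0; apply: ph1.
have ph' : phase q.+1 x.+1 (x.+1 + 3*k) by apply: (phI ph); lia.
case: (IH ltac:(lia') ph' hz) => [[k' hk' T]|phk].
  by left; exists k'; first lia.
set e := x + 3*k.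
have b1 : C q.+1 e.+1 = false by apply: (phF ph); lia.
have b2 : C q.+1 e.+2 = true by apply: (phT ph); lia.
have b3 : C q.+1 e.+3 = true by apply: (phT ph); lia.
have a1 : C q e.+1 = true by apply: aboveP => //; lia'.
case E: (C q e.+3).
- have a2 : C q e.+2 = false by apply: houseF => //; lia'.
  by left; exists k; last split.
- have [_ _ _ [a2 _ _]] := G1 (i:=q) (c:=e.+3) ltac:(lia') ltac:(lia') E.
  right; have -> : x + 3 * k.+1 = e.+3 by rewrite /e; lia.
  have p1 : phase q x e.+1.
    apply: phS => //; first lia.
    by rewrite a1; have -> : (e.+1 - x) %% 3 = 1 by rewrite /e; lia.
  have p2 : phase q x e.+2.
    apply: phS => //; first lia.
    by rewrite a2; have -> : (e.+2 - x) %% 3 = 2 by rewrite /e; lia.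
  apply: phS => //; first lia.
  by rewrite E; have -> : (e.+3 - x) %% 3 = 0 by rewrite /e; lia.
Qed.

Lemma scanL q x K w : 1 <= q -> q.+1 <= m -> 2 <= x -> w <= n -> (x + 3*K).+1 <= w ->
  phase q.+1 x (x + 3*K) -> C q (x + 3*K).+1 = false -> phase q (x + 3*K).+1 w ->
  C q x.-1 = false ->
  exists2 i, i <= K & C q (x + 3*i).-1 = false /\ phase q (x + 3*i).+1 w.
Proof.
move=> hq hqm hx hw.
elim: K => [|K IH] hK ph hz phw hl.
  by exists 0; last (rewrite muln0 addn0 in phw *; split).
set e := x + 3*K.
have E4 : x + 3*K.+1 = e.+3 by rewrite /e; lia'.
rewrite E4 in hK hz phw ph.
case E: (C q e.+2).
- have b2 : C q.+1 e.+2 = true by apply: (phT ph); rewrite /e; lia'.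
  have b3 : C q.+1 e.+3 = false by apply: (phF ph); rewrite /e; lia'.
  have a3 : C q e.+3 = true by apply: aboveP => //; lia'.
  have a1 : C q e.+1 = false.
    case E1: (C q e.+1) => //.
    have := G2 (i:=q) (c:=e.+2) ltac:(lia') ltac:(lia') ltac:(lia') ltac:(lia') E E1 a3.
    by rewrite b2.
  have phe : phase q e.+1 w by apply: phP.
  have ph' : phase q.+1 x e by apply: (phI ph); rewrite /e; lia'.
  have [i hi H] := IH ltac:(lia') ph' a1 phe hl.
  by exists i; first lia'.
- by exists K.+1; last (rewrite E4 /=; split).
Qed.

Definition KB p o := [/\ 1 <= p, p.+1 <= m, 1 <= o, phase p.+1 o.+1 n
  & (n - o.+1) %% 3 = 2 /\ C p o = false].
Definition KA p o := [/\ 1 <= p, p.+2 <= m, 1 <= o, o.+2 <= n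
  & [/\ phase p.+2 o.+2 n, C p.+1 o.+1 = false & C p o = false]].
Definition TT q y k := [/\ 1 <= q, q.+1 <= m, 1 <= y, (y.+1 + 3*k).+2 <= n
  & Tcfg q.+1 y.+1 k /\ C q y = false].
Definition KA2 p o J := [/\ 1 <= p, p.+2 <= m, 1 <= o, o.+2 + 3*J <= n
  & [/\ phase p.+2 o.+2 (o.+2 + 3*J), C p.+1 o.+1 = false, C p o = false
      & C p.+1 (o.+1 + 3*J) = true]].

Lemma KB_step p o : (forall p' o', p'.+2 <= p -> ~ KA p' o') -> ~ KB p o.
Proof.
move=> IH [hp hpm ho ph [hmod hz]].
have hn : o.+3 <= n by lia'.
set K := (n - o.+1) %/ 3.
set e := o.+1 + 3*K.
have he : e.+2 = n by rewrite /e /K; lia'.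
have b0 : C p.+1 e = false by apply: (phF ph); rewrite /e /K; lia'.
have b1 : C p.+1 e.+1 = true by apply: (phT ph); rewrite /e /K; lia'.
have cn : C p e.+2 = true by rewrite he; apply: colnP; lia'.
have a0 : C p e = true by apply: aboveP => //; rewrite /e /K; lia'.
have a1 : C p e.+1 = false by apply: houseF => //; rewrite /e /K; lia'.
have [[_ hl]|[hr _]|[p2 _]] := G3 (i:=p) (c:=e.+1) ltac:(lia') ltac:(lia') a1.
- by rewrite /= b0 in hl.
- lia'.
destruct p as [|q]; first lia'.
have phb : phase q.+2 o.+1 (o.+1 + 3*K) by apply: (phI ph); rewrite /e /K; lia'.
have phw : phase q.+1 (o.+1 + 3*K).+1 n.
  rewrite -he; apply: phS; [apply: ph1|lia'|].
    by [].
  by rewrite cn; have -> : (e.+2 - e.+1) %% 3 = 1 by lia'.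
have [i hi [zl phz]] := scanL (q:=q.+1) (x:=o.+1) (K:=K) (w:=n) ltac:(lia') ltac:(lia')
   ltac:(lia') (leqnn n) ltac:(rewrite /e /K in he *; lia') phb a1 phw hz.
set z := o.+1 + 3*i.
have zl' : C q.+1 z.-1 = false by [].
have zr : C q.+1 (z.-1).+2 = false.
  apply: (CEb (r:=q.+1) (c:=z.+1)); [apply: (phF phz)|by []|]; rewrite /z; lia'.
have [r [qr hr cz [u0 u1 u2] [_ _ u3 u4]]] := Vlem (q:=q) (a:=z.-1) ltac:(lia') ltac:(lia')
   ltac:(rewrite /z; lia') ltac:(rewrite /z; lia') zl' zr.
subst q.
have u3' : C r z.+2 = false by ceb u3.
have u4' : C r.+1 z.+2 = true by ceb u4.
have [_ zn _ _] := G1 (i:=r) (c:=z.+2) ltac:(lia') ltac:(lia') u3'.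
have c4 : C r.+2 z.+4 = false by apply: (phF phz); rewrite /z /e /K in he *; lia'.
have c3 : C r.+2 z.+3 = true by apply: (phT phz); rewrite /z /e /K in he *; lia'.
have d4 : C r.+1 z.+4 = true by apply: aboveP => //; rewrite /z /e /K in he *; lia'.
have d3 : C r.+1 z.+3 = false by apply: houseF => //; rewrite /z /e /K in he *; lia'.
apply: (IH r z.+2); first lia'.
split => //; try lia'; split => //.
by apply: (phI phz); rewrite /z /e /K in he *; lia'.
Qed.

Lemma KA_step p o : ~ KB p.+1 o.+1 -> ~ KB p o -> (forall k, ~ TT p o k) -> ~ KA p o.
Proof.
move=> nKB1 nKB nTT [hp hpm ho hon [ph h1 h0]].
have [o2 on _ _] := G1 (i:=p.+1) (c:=o.+1) ltac:(lia') ltac:(lia') h1.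
have hm : (n - o.+2) %% 3 < 3 by lia'.
case E: ((n - o.+2) %% 3) hm => [|[|[|x]]] hm //.
- have : C p.+2 n = false by apply: (phF ph); lia'.
  by rewrite colnP //; lia'.
- set K := (n - o.+2) %/ 3.
  have phb : phase p.+2 o.+2 (o.+2 + 3*K) by apply: (phI ph); rewrite /K; lia'.
  case: (scanR (q:=p.+1) (x:=o.+1) (k:=K) ltac:(lia') ltac:(lia') ltac:(lia')
     ltac:(rewrite /K; lia') phb h1) => [[k' hk' T]|phk].
    by apply: (nTT k'); split => //; rewrite /K in hk'; lia'.
  have c0 : C p.+2 (o.+2 + 3*K) = false by apply: (phF ph); rewrite /K; lia'.
  have c1 : C p.+1 (o.+1 + 3*K).+1 = true.
    by apply: aboveP; [lia'|lia'|rewrite /K; lia'|ceb c0].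
  have c2 : C p.+1 (o.+1 + 3*K).+2 = true.
    have -> : (o.+1 + 3*K).+2 = n by rewrite /K; lia'.
    by apply: colnP; lia'.
  have q1 : phase p.+1 o.+1 (o.+1 + 3*K).+1.
    apply: phS => //; first lia'.
    by rewrite c1; have -> : ((o.+1 + 3*K).+1 - o.+1) %% 3 = 1 by lia'.
  have q2 : phase p.+1 o.+1 (o.+1 + 3*K).+2.
    apply: phS => //; first lia'.
    by rewrite c2; have -> : ((o.+1 + 3*K).+2 - o.+1) %% 3 = 2 by lia'.
  have en : (o.+1 + 3*K).+2 = n by rewrite /K; lia'.
  rewrite en in q2.
  apply: nKB; split; [lia'|lia'|lia'|exact: q2|split => //; rewrite -en; lia'].
- apply: nKB1; split; [lia'|lia'|lia'|exact: ph|split => //].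
Qed.

Lemma KA2_step p o J : (forall k, ~ TT p o k) -> ~ KA2 p o J.
Proof.
move=> nTT [hp hpm ho hn [ph h1 h0 hE]].
case: J hn ph hE => [|J] hn ph hE.
  have : C p.+1 o.+1 = true by ceb hE.
  by rewrite h1.
case: (scanR (q:=p.+1) (x:=o.+1) (k:=J.+1) ltac:(lia') ltac:(lia') ltac:(lia')
     ltac:(lia') ph h1) => [[k' hk' T]|phk].
  by apply: (nTT k'); split => //; lia'.
have : C p.+1 (o.+1 + 3*J.+1) = false by apply: (phF phk); lia'.
by rewrite hE.
Qed.

Lemma TT_step q y k : (forall s o J, s.+2 <= q -> ~ KA2 s o J) -> ~ TT q y k.
Proof.
move=> IH [hq hqm hy hn [[ph h1 h2] hz]].
set e := y.+1 + 3*k.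
have b0 : C q.+1 e = false by apply: (phF ph); rewrite /e; lia'.
have [r [qr hr ce1 [u0 u1 u2] [u3 u4 u5 u6]]] :=
  Vlem (q:=q) (a:=e) ltac:(lia') ltac:(lia') ltac:(rewrite /e; lia') hn b0 h2.
subst q.
case: k @e hn ph h1 h2 b0 ce1 u0 u1 u2 u3 u4 u5 u6 => [|k] e hn ph h1 h2 b0 ce1 u0 u1 u2 u3 u4 u5 u6.
  have : C r.+1 y = true by ceb u4.
  by rewrite hz.
have a0 : C r.+1 e = true by apply: aboveP => //; rewrite /e; lia'.
have bm : C r.+2 e.-1 = true by apply: (phT ph); rewrite /e; lia'.
have am2 : C r.+1 (e.-1).-1 = false.
  case E: (C r.+1 (e.-1).-1) => //.
  have a0' : C r.+1 (e.-1).+1 = true by ceb a0.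
  have := G2 (i:=r.+1) (c:=e.-1) ltac:(lia') ltac:(lia') ltac:(rewrite /e; lia')
     ltac:(rewrite /e; lia') u4 E a0'.
  by rewrite bm.
have phb : phase r.+2 y.+1 (y.+1 + 3*k) by apply: (phI ph); rewrite /e; lia'.
have st : C r.+1 (y.+1 + 3*k).+1 = false by ceb am2.
have phw : phase r.+1 (y.+1 + 3*k).+1 e.+1.
  have -> : (y.+1 + 3*k).+1 = (e.-1).-1 by rewrite /e; lia'.
  have ee : e = ((e.-1).-1).+2 by rewrite /e; lia'.
  have u4' : C r.+1 ((e.-1).-1).+1 = true by ceb u4.
  have a0'' : C r.+1 ((e.-1).-1).+2 = true by rewrite -ee.
  apply: phP => //.
  have -> : ((e.-1).-1).+3 = e.+1 by rewrite /e; lia'.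
  exact: ph1.
have [i hi [zl phz]] := scanL (q:=r.+1) (x:=y.+1) (K:=k) (w:=e.+1) ltac:(lia') ltac:(lia')
   ltac:(lia') ltac:(rewrite /e; lia') ltac:(rewrite /e; lia') phb st phw hz.
set z := y.+1 + 3*i.
have zr : C r.+1 (z.-1).+2 = false.
  apply: (CEb (r:=r.+1) (c:=z.+1)); [apply: (phF phz)|by []|]; rewrite /z /e; lia'.
have [s [rs hs cz [v0 v1 v2] [_ _ v3 v4]]] := Vlem (q:=r) (a:=z.-1) ltac:(lia') ltac:(lia')
   ltac:(rewrite /z; lia') ltac:(rewrite /z /e; lia') zl zr.
subst r.
have v3' : C s z.+2 = false by ceb v3.
have v4' : C s.+1 z.+2 = true by ceb v4.
have c4 : C s.+2 z.+4 = false by apply: (phF phz); rewrite /z /e; lia'.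
have c3 : C s.+2 z.+3 = true by apply: (phT phz); rewrite /z /e; lia'.
have d4 : C s.+1 z.+4 = true by apply: aboveP => //; rewrite /z /e; lia'.
have d3 : C s.+1 z.+3 = false by apply: houseF => //; rewrite /z /e; lia'.
apply: (IH s z.+2 (k - i)); first lia'.
split; [lia'|lia'|lia'|rewrite /z /e; lia'|split => //].
- by apply: (phI phz); rewrite /z /e; lia'.
- by ceb u0.
Qed.

Lemma allF N : (forall p o, p.+1 <= N -> ~ KB p o) /\ (forall p o, p.+2 <= N -> ~ KA p o) /\
  (forall q y k, q.+1 <= N -> ~ TT q y k) /\ (forall p o J, p.+2 <= N -> ~ KA2 p o J).
Proof.
elim: N => [|N [IB [IA [IT I2]]]].
  by split; [move=> p o h|split; [move=> p o h|split; [move=> q y k h|move=> p o J h]]].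
have hB : forall p o, p.+1 <= N.+1 -> ~ KB p o.
  move=> p o h; apply: KB_step => p' o' h'; apply: IA; lia'.
split => //; split; last split.
- move=> p o h; apply: KA_step.
  + by apply: hB.
  + by apply: IB; lia'.
  + by move=> k; apply: IT; lia'.
- move=> q y k h; apply: TT_step => s o J h'; apply: I2; lia'.
- move=> p o J h; apply: KA2_step => k; apply: IT; lia'.
Qed.

Lemma noKA p o : ~ KA p o.
Proof. by have [_ [h _]] := allF p.+2; apply: h. Qed.

Lemma noTT q y k : ~ TT q y k.
Proof. by have [_ [_ [h _]]] := allF q.+1; apply: h. Qed.

Lemma noIV i j : ~ typeIV m n C i j.
Proof.
case=> /andP [hi him] [/andP [hj hjn] [z1 [z2 [z3 hr]]]].
destruct i as [|[|p]]; try lia'. destruct j as [|[|o]]; try lia'.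
apply: (noKA (p:=p.+1) (o:=o.+1)); split; [lia'|lia'|lia'|lia'|split => //].
move=> c hc; rewrite hr; last lia'.
by have -> : (c - (o.+2 + 1)) = (c - o.+3) by lia'.
Qed.

Lemma noIII i j : ~ typeIII m n C i j.
Proof.
case=> /andP [hi him] [/andP [hj hjn] [z1 [z2 [z3 hr]]]].
destruct i as [|[|p]]; try lia'. destruct j as [|[|o]]; try lia'.
rewrite /= in z1.
have hr' : forall l, o.+3 <= l <= n -> C p.+4 l = true.
  move=> l hl; apply: (CEb (hr l _)); lia'.
have main : forall d k, n - (o.+3 + 3*k) <= d -> o.+3 + 3*k <= n ->
    phase p.+3 o.+3 (o.+3 + 3*k) -> False.
  elim=> [|d IH] k hd hk ph.
    have b0 : C p.+3 (o.+3 + 3*k) = false by apply: (phF ph); lia'.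
    have [_ en _ _] := G1 (i:=p.+3) (c:=o.+3 + 3*k) ltac:(lia') ltac:(lia') b0.
    lia'.
  set e := o.+3 + 3*k.
  have b0 : C p.+3 e = false by apply: (phF ph); rewrite /e; lia'.
  have [_ en _ [_ b1 _]] := G1 (i:=p.+3) (c:=e) ltac:(lia') ltac:(rewrite /e; lia') b0.
  have ph1' : phase p.+3 o.+3 e.+1.
    apply: phS => //; first (rewrite /e; lia').
    by rewrite b1; have -> : (e.+1 - o.+3) %% 3 = 1 by rewrite /e; lia'.
  case: (ltngtP e.+1 n) => [lt|gt|eq]; last first.
  - apply: (noKA (p:=p.+1) (o:=o.+1)); split; [lia'|lia'|lia'|lia'|split => //].
    by rewrite -eq.
  - lia'.
  case E: (C p.+3 e.+2).
  - have ph2 : phase p.+3 o.+3 e.+2.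
      apply: phS => //; first (rewrite /e; lia').
      by rewrite E; have -> : (e.+2 - o.+3) %% 3 = 2 by rewrite /e; lia'.
    case: (ltngtP e.+2 n) => [lt2|gt2|eq2]; last first.
    + apply: (noKA (p:=p.+1) (o:=o.+1)); split; [lia'|lia'|lia'|lia'|split => //].
      by rewrite -eq2.
    + lia'.
    have b3 : C p.+3 e.+3 = false.
      case E3: (C p.+3 e.+3) => //.
      have := G2 (i:=p.+3) (c:=e.+2) ltac:(lia') ltac:(lia') ltac:(lia') lt2 E b1 E3.
      by rewrite hr' //; rewrite /e; lia'.
    have ph3 : phase p.+3 o.+3 e.+3.
      apply: phS => //; first (rewrite /e; lia').
      by rewrite b3; have -> : (e.+3 - o.+3) %% 3 = 0 by rewrite /e; lia'.
    apply: (IH k.+1); try (rewrite /e in hd lt2 *; lia').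
    by have -> : o.+3 + 3 * k.+1 = e.+3 by rewrite /e; lia'.
  - apply: (noTT (q:=p.+2) (y:=o.+2) (k:=k)); split; [lia'|lia'|lia'|rewrite /e in lt; lia'|split => //].
apply: (main (n - o.+3) 0); try lia'.
rewrite muln0 addn0; exact: ph1.
Qed.

End Core.

Section FromES.
Variables (m n : nat) (C : config).
Hypothesis Hes : ES m n C.

Lemma esG1 i c : 1 <= i <= m -> 1 <= c <= n -> C i c = false ->
  [/\ 2 <= c, c < n, i < m & [/\ C i c.-1 = true, C i c.+1 = true & C i.+1 c = true]].
Proof.
move=> hi hc z.
have [_ [hp _]] := Hes.
have := hp i c ltac:(rewrite /inside hi hc //) z.
rewrite /blocked /add_house /inside.
case: c hc z => [|c] hc z; first lia.
rewrite !eqxx /=.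
have -> : (c == c.+1) = false by apply/eqP; lia.
have -> : (c.+2 == c.+1) = false by apply/eqP; lia.
have -> : (i.+1 == i) = false by apply/eqP; lia.
rewrite /=.
case/and4P => /andP [h1 h2] /andP [h3 h4] /andP [h5 h6] h7.
split; try lia; split => //.
Qed.

Lemma esG2 i c : 1 <= i -> i < m -> 2 <= c -> c < n ->
  C i c = true -> C i c.-1 = true -> C i c.+1 = true -> C i.+1 c = false.
Proof.
move=> h1 h2 h3 h4 e0 e1 e2.
case E: (C i.+1 c) => //.
have [[hp _] _] := Hes.
have := hp i c ltac:(rewrite /inside; apply/andP; split; apply/andP; split; lia).
rewrite /blocked e0 e1 e2 E /inside.
have -> : (0 < i <= m) = true by apply/andP; split; lia.
have -> : (0 < c.-1 <= n) = true by apply/andP; split; lia.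
have -> : (0 < c.+1 <= n) = true by apply/andP; split; lia.
have -> : (0 < i.+1 <= m) = true by apply/andP; split; lia.
have -> : (0 < c <= n) = true by apply/andP; split; lia.
by [].
Qed.

Lemma addC (D : config) i c a b : (a != i) || (b != c) -> add_house D i c a b = D a b.
Proof. by rewrite /add_house; case: (a == i); case: (b == c). Qed.

Lemma esG3 i c : 1 <= i <= m -> 1 <= c <= n -> C i c = false ->
  [\/ 3 <= c /\ C i.+1 c.-1 = true,
      c.+2 <= n /\ C i.+1 c.+1 = true |
      2 <= i /\ [/\ C i.-1 c.-1 = true, C i.-1 c = true & C i.-1 c.+1 = true]].
Proof.
have [[hp _] [_ ha]] := Hes.
move=> hi hc z.
have [i' [j' [hin [hne [hC hb]]]]] := ha i c ltac:(rewrite /inside hi hc //) z.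
have nb := hp i' j' hin.
move: hb nb; rewrite /blocked /inside.
case/andP: hin => /andP [hi1 hi2] /andP [hj1 hj2].
case: (eqVneq i' i) => [ei|ni].
- subst i'.
  have nc : j' != c by apply/eqP => ej; apply: hne; rewrite ej.
  rewrite (addC _ _ (a:=i) (b:=j')) ?nc ?orbT //.
  case: (eqVneq j' c.+1) => [ej|nj1].
  + subst j'.
    rewrite (addC _ _ (a:=i) (b:=c.+2)); last by apply/orP; right; apply/eqP; lia.
    rewrite (addC _ _ (a:=i.+1) (b:=c.+1)); last by apply/orP; left; apply/eqP; lia.
    case/and4P => _ _ /andP [/andP [_ /andP [_ h]] h2] /andP [_ h3] _.
    by apply: Or32; split => //; lia.
  case: (eqVneq j'.+1 c) => [ej|nj2].
  + subst c.
    rewrite (addC _ _ (a:=i) (b:=j'.-1)); last by apply/orP; right; apply/eqP; lia.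
    rewrite (addC _ _ (a:=i.+1) (b:=j')); last by apply/orP; left; apply/eqP; lia.
    case/and4P => _ /andP [/andP [_ /andP [h1 _]] h2] _ /andP [_ h3] _.
    by apply: Or31; split => //; lia.
  rewrite (addC _ _ (a:=i) (b:=j'.-1)); last by apply/orP; right; apply/eqP; lia.
  rewrite (addC _ _ (a:=i) (b:=j'.+1)); last by apply/orP; right; apply/eqP; lia.
  rewrite (addC _ _ (a:=i.+1) (b:=j')); last by apply/orP; left; apply/eqP; lia.
  by move=> ->.
rewrite (addC _ _ (a:=i') (b:=j')) ?ni //.
rewrite (addC _ _ (a:=i') (b:=j'.-1)) ?ni //.
rewrite (addC _ _ (a:=i') (b:=j'.+1)) ?ni //.
case: (eqVneq i'.+1 i) => [ei|ni1]; last first.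
  by rewrite (addC _ _ (a:=i'.+1) (b:=j')) ?ni1 // => ->.
case: (eqVneq j' c) => [ej|nj]; last first.
  by rewrite (addC _ _ (a:=i'.+1) (b:=j')) ?nj ?orbT // => ->.
subst i j'.
case/and4P => h0 /andP [_ h1] /andP [_ h2] _ _.
by apply: Or33; split => //; lia.
Qed.

End FromES.

Section Mirror.
Variables (m n : nat) (C : config).
Hypothesis G1 : forall i c, 1 <= i <= m -> 1 <= c <= n -> C i c = false ->
  [/\ 2 <= c, c < n, i < m & [/\ C i c.-1 = true, C i c.+1 = true & C i.+1 c = true]].
Hypothesis G2 : forall i c, 1 <= i -> i < m -> 2 <= c -> c < n ->
  C i c = true -> C i c.-1 = true -> C i c.+1 = true -> C i.+1 c = false.
Hypothesis G3 : forall i c, 1 <= i <= m -> 1 <= c <= n -> C i c = false ->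
  [\/ 3 <= c /\ C i.+1 c.-1 = true,
      c.+2 <= n /\ C i.+1 c.+1 = true |
      2 <= i /\ [/\ C i.-1 c.-1 = true, C i.-1 c = true & C i.-1 c.+1 = true]].

Let D := mirror n C.

Lemma mG1 i c : 1 <= i <= m -> 1 <= c <= n -> D i c = false ->
  [/\ 2 <= c, c < n, i < m & [/\ D i c.-1 = true, D i c.+1 = true & D i.+1 c = true]].
Proof.
rewrite /D /mirror => hi hc z.
have [a b d [e f g]] := G1 (c:=n.+1 - c) hi ltac:(lia) z.
split; try lia; split.
- by apply: (cfgE f); lia.
- by apply: (cfgE e); lia.
- by apply: (cfgE g); lia.
Qed.

Lemma mG2 i c : 1 <= i -> i < m -> 2 <= c -> c < n ->
  D i c = true -> D i c.-1 = true -> D i c.+1 = true -> D i.+1 c = false.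
Proof.
rewrite /D /mirror => h1 h2 h3 h4 e0 e1 e2.
have e1' : C i (n.+1 - c).+1 = true by apply: (cfgE e1); lia.
have e2' : C i (n.+1 - c).-1 = true by apply: (cfgE e2); lia.
exact: (G2 (c:=n.+1 - c) h1 h2 ltac:(lia) ltac:(lia) e0 e2' e1').
Qed.

Lemma mG3 i c : 1 <= i <= m -> 1 <= c <= n -> D i c = false ->
  [\/ 3 <= c /\ D i.+1 c.-1 = true,
      c.+2 <= n /\ D i.+1 c.+1 = true |
      2 <= i /\ [/\ D i.-1 c.-1 = true, D i.-1 c = true & D i.-1 c.+1 = true]].
Proof.
rewrite /D /mirror => hi hc z.
have [_ _ _ _] := G1 (c:=n.+1 - c) hi ltac:(lia) z.
case: (G3 (c:=n.+1 - c) hi ltac:(lia) z) => [[h1 h2]|[h1 h2]|[h1 [h2 h3 h4]]].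
- by apply: Or32; split; [lia|apply: (cfgE h2); lia].
- by apply: Or31; split; [lia|apply: (cfgE h2); lia].
- apply: Or33; split => //; split.
  + by apply: (cfgE h4); lia.
  + by [].
  + by apply: (cfgE h2); lia.
Qed.

End Mirror.

Theorem mainTheorem10 (m n : nat) (C : config) :
  ES m n C ->
  ~ exists i j,
      typeIII m n C i j \/ typeIV m n C i j \/
      typeIII m n (mirror n C) i j \/ typeIV m n (mirror n C) i j.
Proof.
move=> hes [i [j H]].
have g1 := esG1 hes. have g2 := esG2 hes. have g3 := esG3 hes.
have g1' := mG1 g1. have g2' := mG2 g2. have g3' := mG3 g1 g3.
case: H => [H|[H|[H|H]]].
- exact: (noIII g1 g2 g3 H).
- exact: (noIV g1 g2 g3 H).
- exact: (noIII g1' g2' g3' H).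
- exact: (noIV g1' g2' g3' H).
Qed.
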